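(* Let $A,B$ be closed linear relations in $X^2$ such that $\{A,B\}$ is a dual pair with $(A^* )_s|_{D(B)}=B_s$ and $(B^* )_s|_{D(A)}=A_s$. Suppose $B^*(0)\cap N(A^* )=\{0\}$, $A^*(0)\cap N(B^* )=\{0\}$, and that $\tilde A\in\mathrm{Ext}\{A,B\}$ satisfies $\dim(D(B^* )/D(\tilde A))=\dim(D(\tilde A)/D(A))$. Then $\tilde A$ is a quasi-selfadjoint extension of $\{A,B\}$.
   Context: $X$ is a complex Hilbert space; linear relations are linear subspaces of $X^2=X\times X$, with domain $D(T)$, $N(T)=\{x:(x,0)\in T\}$, $T(0)=\{y:(0,y)\in T\}$. Adjoint: $T^*=\{(f,g):\langle g,x\rangle=\langle f,y\rangle\ \forall(x,y)\in T\}$. For closed $T$: $T_\infty=\{(0,y)\in T\}$, $T_s=T\ominus T_\infty$ (an operator with $D(T_s)=D(T)$). Closed relations $A,B$ form a dual pair $\{A,B\}$ if $A\subset B^*$ (equivalently $B\subset A^*$). $\mathrm{Ext}\{A,B\}$ is the set of closed relations $\tilde A$ with $A\subset\tilde A\subset B^*$. An extension $\tilde A\in\mathrm{Ext}\{A,B\}$ is quasi-selfadjoint if $\dim(D(\tilde A)/D(A))=\dim(D(\tilde A^* )/D(B))$. *)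

(* Defs.v *)
From mathcomp Require Import all_boot all_algebra complex reals.
Import GRing.Theory Num.Theory.
Set Implicit Arguments. Unset Strict Implicit. Unset Printing Implicit Defensive.
Local Open Scope ring_scope.
Local Open Scope complex_scope.

Section LinRel.
Variables (R : realType) (X : lmodType R[i]) (ip : X -> X -> R[i]).

Definition nsq (x : X) : R[i] := ip x x.

Definition cvg_to (u : nat -> X) (x : X) : Prop :=
  forall e : R[i], 0 < e -> exists N : nat, forall n, (N <= n)%N -> `|nsq (u n - x)| < e.

Definition cauchy (u : nat -> X) : Prop :=
  forall e : R[i], 0 < e -> exists N : nat, forall n m, (N <= n)%N -> (N <= m)%N ->
    `|nsq (u n - u m)| < e.

Definition is_hilbert : Prop :=
  [/\ (forall a x y z, ip (a *: x + y) z = a * ip x z + ip y z),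
      (forall x y, ip y x = (ip x y)^*),
      (forall x, 0 <= ip x x),
      (forall x, ip x x = 0 -> x = 0)
    & (forall u, cauchy u -> exists x, cvg_to u x)].

Definition linrel := X -> X -> Prop.

Definition is_linrel (T : linrel) : Prop :=
  [/\ T 0 0,
      (forall x y x' y', T x y -> T x' y' -> T (x + x') (y + y'))
    & (forall a x y, T x y -> T (a *: x) (a *: y))].

(* closed: closed subset of X^2 with the product (Hilbert) topology *)
Definition closed_rel (T : linrel) : Prop :=
  forall (u v : nat -> X) x y, (forall n, T (u n) (v n)) ->
    cvg_to u x -> cvg_to v y -> T x y.

Definition closed_linrel (T : linrel) : Prop := is_linrel T /\ closed_rel T.

Definition dom (T : linrel) : X -> Prop := fun x => exists y, T x y.
Definition ker (T : linrel) : X -> Prop := fun x => T x 0.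
Definition mul0 (T : linrel) : X -> Prop := fun y => T 0 y.

Definition adj (T : linrel) : linrel :=
  fun f g => forall x y, T x y -> ip g x = ip f y.

Definition subrel (S T : linrel) : Prop := forall x y, S x y -> T x y.

(* T_infty = {(0,y) in T};  T_s = T ⊖ T_infty (orthogonal complement in X^2
   w.r.t. <(x,y),(u,v)> = <x,u> + <y,v>) *)
Definition Tinf (T : linrel) : linrel := fun x y => x = 0 /\ T 0 y.
Definition Ts (T : linrel) : linrel :=
  fun x y => T x y /\ (forall u v, Tinf T u v -> ip x u + ip y v = 0).

Definition restr (T : linrel) (D : X -> Prop) : linrel := fun x y => T x y /\ D x.

Definition releq (S T : linrel) : Prop := forall x y, S x y <-> T x y.

Definition dual_pair (A B : linrel) : Prop :=
  closed_linrel A /\ closed_linrel B /\ subrel A (adj B).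

Definition Ext (A B At : linrel) : Prop :=
  closed_linrel At /\ subrel A At /\ subrel At (adj B).

(* {e_i} is a Hamel basis of V modulo W (i.e. its image is a basis of V/W) *)
Definition basis_mod (V W : X -> Prop) (I : choiceType) (e : I -> X) : Prop :=
  [/\ (forall i, V (e i)),
      (forall (s : seq I) (c : I -> R[i]), uniq s ->
          W (\sum_(i <- s) c i *: e i) -> forall i, i \in s -> c i = 0)
    & (forall v, V v -> exists (s : seq I) (c : I -> R[i]),
          W (v - \sum_(i <- s) c i *: e i))].

(* dim(V/W) = dim(V'/W') (as cardinals): bases of the two quotient spaces
   are in bijection *)
Definition eqdim_quot (V W V' W' : X -> Prop) : Prop :=
  exists (I J : choiceType) (e : I -> X) (f : J -> X),
    [/\ basis_mod V W e, basis_mod V' W' f & exists g : I -> J, bijective g].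

Definition quasi_selfadjoint (A B At : linrel) : Prop :=
  Ext A B At /\ eqdim_quot (dom At) (dom A) (dom (adj At)) (dom B).

End LinRel.

(* Main.v *)
Require Import Defs.
From mathcomp Require Import all_boot all_algebra complex reals.
From mathcomp Require Import boolp classical_sets.
From mathcomp Require Import ring lra order.
Import Order.TTheory GRing.Theory Num.Theory.
Set Implicit Arguments. Unset Strict Implicit. Unset Printing Implicit Defensive.
Local Open Scope ring_scope.
Local Open Scope complex_scope.
Notation cRe := complex.Re.
Notation cIm := complex.Im.

Section CplxLemmas.
Variable R : realType.
Implicit Types (z w : R[i]) (k : R).
Lemma ReD z w : cRe (z + w) = cRe z + cRe w. Proof. by case: z => a b; case: w => c d; simpc. Qed.
Lemma ReN z : cRe (- z) = - cRe z. Proof. by case: z => *; simpc. Qed.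
Lemma ReB z w : cRe (z - w) = cRe z - cRe w. Proof. by rewrite ReD ReN. Qed.
Lemma ReMk k z : cRe (k%:C * z) = k * cRe z. Proof. by case: z => *; simpc. Qed.
Lemma ReJ z : cRe (z^*) = cRe z. Proof. by case: z => *; simpc. Qed.
Lemma ReJM z : cRe (z^* * z) = cRe z ^+ 2 + cIm z ^+ 2.
Proof. by case: z => a b; simpc => /=; ring. Qed.
Lemma Rek k : cRe (k%:C) = k. Proof. by []. Qed.
Lemma ge0_real z : 0 <= z -> z = (cRe z)%:C.
Proof. by case: z => a b; rewrite lecE /= => /andP[/eqP -> _]. Qed.
Lemma gt0_real z : 0 < z -> z = (cRe z)%:C /\ 0 < cRe z.
Proof. by case: z => a b; rewrite ltcE /= => /andP[/eqP -> h]. Qed.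
Lemma normk k : 0 <= k -> `|k%:C| = k%:C.
Proof. by move=> h; rewrite ger0_norm // ler0c. Qed.
Lemma conjk k : (k%:C)^* = k%:C. Proof. exact: conjc_real. Qed.
Lemma ReJM0 z : cRe (z^* * z) <= 0 -> z = 0.
Proof.
case: z => a b; rewrite ReJM /= => h.
have ha : a ^+ 2 = 0 by apply/eqP; rewrite eq_le sqr_ge0 andbT; nra.
have hb : b ^+ 2 = 0 by apply/eqP; rewrite eq_le sqr_ge0 andbT; nra.
by move/eqP: ha; rewrite sqrf_eq0 => /eqP ->; move/eqP: hb; rewrite sqrf_eq0 => /eqP ->.
Qed.
Lemma conjkM k z : (k%:C * z)^* = k%:C * z^*.
Proof. by case: z => *; simpc. Qed.
Lemma ReJM_ge0 z : 0 <= cRe (z^* * z).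
Proof. by rewrite ReJM addr_ge0 // sqr_ge0. Qed.
Lemma numconjE z : Num.conj z = complex.conjc z.
Proof. reflexivity. Qed.
End CplxLemmas.

Lemma arch (R : realType) (r : R) : 0 < r -> exists N, forall n, (N <= n)%N -> (n.+1%:R)^-1 < r.
Proof.
move=> r0; exists (Num.bound (r^-1)) => n hn.
have r1 : 0 <= r^-1 by rewrite invr_ge0 ltW.
have h1 := archi_boundP r1.
have h2 : (Num.bound r^-1)%:R <= n.+1%:R :> R by rewrite ler_nat; apply: leq_trans hn _.
rewrite invf_plt ?posrE ?ltr0Sn //. exact: lt_le_trans h1 h2.
Qed.

Lemma ltr0c (R : realType) (k : R) : (0 < k%:C) = (0 < k).
Proof. by rewrite ltcE /= eqxx. Qed.

Section Hil.
Variables (R : realType) (Y : lmodType R[i]) (ip : Y -> Y -> R[i]).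
Hypothesis HY : is_hilbert ip.
Implicit Types (x y z : Y) (a c : R[i]) (k : R).

Let hlin : forall a x y z, ip (a *: x + y) z = a * ip x z + ip y z.
Proof. by case: HY. Qed.
Let hsym : forall x y, ip y x = (ip x y)^*.
Proof. by case: HY. Qed.

Lemma ip0l z : ip 0 z = 0.
Proof.
have := hlin 1 0 0 z; rewrite scale1r addr0 mul1r => h.
by apply: (@addrI _ (ip 0 z)); rewrite addr0 -h.
Qed.
Lemma ipDl x y z : ip (x + y) z = ip x z + ip y z.
Proof. by have := hlin 1 x y z; rewrite scale1r mul1r. Qed.
Lemma ipZl a x z : ip (a *: x) z = a * ip x z.
Proof. by have := hlin a x 0 z; rewrite addr0 ip0l addr0. Qed.
Lemma ipNl x z : ip (- x) z = - ip x z.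
Proof. by rewrite -scaleN1r ipZl mulN1r. Qed.
Lemma ipBl x y z : ip (x - y) z = ip x z - ip y z.
Proof. by rewrite ipDl ipNl. Qed.
Lemma ipC x y : ip y x = (ip x y)^*.
Proof. exact: hsym. Qed.
Lemma ip0r z : ip z 0 = 0.
Proof. by rewrite ipC ip0l conjc0. Qed.
Lemma ipDr x y z : ip z (x + y) = ip z x + ip z y.
Proof. by rewrite ipC ipDl rmorphD [ip z x]ipC [ip z y]ipC. Qed.
Lemma ipZr a x z : ip z (a *: x) = a^* * ip z x.
Proof. by rewrite ipC ipZl rmorphM [ip z x]ipC. Qed.
Lemma ipNr x z : ip z (- x) = - ip z x.
Proof. by rewrite ipC ipNl rmorphN [ip z x]ipC. Qed.
Lemma ipBr x y z : ip z (x - y) = ip z x - ip z y.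
Proof. by rewrite ipDr ipNr. Qed.

Definition Nr x : R := cRe (ip x x).
Lemma ipxx x : ip x x = (Nr x)%:C.
Proof. by case: HY => _ _ hp _ _; apply: ge0_real. Qed.
Lemma Nr_ge0 x : 0 <= Nr x.
Proof. by case: HY => _ _ hp _ _; have := hp x; rewrite ipxx ler0c. Qed.
Lemma Nr_le0 x : Nr x <= 0 -> x = 0.
Proof.
move=> h; case: HY => _ _ _ hd _; apply: hd; rewrite ipxx.
by have -> : Nr x = 0 by apply: le_anti; rewrite h Nr_ge0.
Qed.
Lemma ReipC x y : cRe (ip y x) = cRe (ip x y).
Proof. by rewrite ipC ReJ. Qed.
Lemma NrD x y : Nr (x + y) = Nr x + Nr y + 2 * cRe (ip x y).
Proof.
rewrite /Nr ipDl !ipDr !ReD [cRe (ip y x)]ReipC. ring.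
Qed.
Lemma NrN x : Nr (- x) = Nr x.
Proof. by rewrite /Nr ipNl ipNr opprK. Qed.
Lemma NrB x y : Nr (x - y) = Nr x + Nr y - 2 * cRe (ip x y).
Proof. by rewrite NrD NrN ipNr ReN; ring. Qed.
Lemma NrC x y : Nr (x - y) = Nr (y - x).
Proof. by rewrite -NrN opprB. Qed.
Lemma ReipZk k x y : cRe (ip (k%:C *: x) y) = k * cRe (ip x y).
Proof. by rewrite ipZl ReMk. Qed.
Lemma ReipZkr k x y : cRe (ip y (k%:C *: x)) = k * cRe (ip y x).
Proof. by rewrite ReipC ReipZk ReipC. Qed.
Lemma NrZk k x : Nr (k%:C *: x) = k ^+ 2 * Nr x.
Proof. by rewrite /Nr ReipZk ReipZkr; ring. Qed.

Definition cvgR (u : nat -> Y) x := forall r : R, 0 < r ->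
  exists N, forall n, (N <= n)%N -> Nr (u n - x) < r.
Definition cauchyR (u : nat -> Y) := forall r : R, 0 < r ->
  exists N, forall n m, (N <= n)%N -> (N <= m)%N -> Nr (u n - u m) < r.

Lemma normNr x : `|nsq ip x| = (Nr x)%:C.
Proof. by rewrite /nsq ipxx normk // Nr_ge0. Qed.

Lemma cvg_toE u x : cvg_to ip u x <-> cvgR u x.
Proof.
split=> h r hr.
  have rc : 0 < r%:C by rewrite ltr0c.
  have [N hN] := h (r%:C) rc.
  by exists N => n /hN; rewrite normNr ltcR.
have [-> r0] := gt0_real hr.
have [N hN] := h _ r0; exists N => n /hN hn; by rewrite normNr ltcR.
Qed.

Lemma cauchyE u : cauchyR u -> cauchy ip u.
Proof.
move=> h r hr; have [-> r0] := gt0_real hr.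
have [N hN] := h _ r0; exists N => n m hn hm; by rewrite normNr ltcR; apply: hN.
Qed.

Lemma complete u : cauchyR u -> exists x, cvgR u x.
Proof.
move=> /cauchyE hc; case: HY => _ _ _ _ hcomp.
by have [x hx] := hcomp u hc; exists x; apply/cvg_toE.
Qed.

Lemma cont_Re (u : nat -> Y) w :
  (forall r, 0 < r -> exists N, forall n, (N <= n)%N -> Nr (u n) < r) ->
  forall e, 0 < e -> exists N, forall n, (N <= n)%N -> cRe (ip (u n) w) < e.
Proof.
move=> hu e e0.
set t := e / (Nr w + 1).
have hw := Nr_ge0 w.
have t0 : 0 < t by rewrite divr_gt0 // ltr_wpDl.
have ht : t * Nr w + t = e.
  have hw1 : Nr w + 1 != 0 by rewrite gt_eqF // ltr_wpDl.
  by rewrite /t; field.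
have [N hN] := hu (t * e) (mulr_gt0 t0 e0).
exists N => n /hN hn.
have h0 := Nr_ge0 (u n - t%:C *: w).
rewrite NrB NrZk ReipZkr in h0.
set X := cRe (ip (u n) w) in h0 *.
have : t * X < t * e by nra.
by rewrite ltr_pM2l.
Qed.

Lemma cvg0 (u : nat -> Y) p : cvgR u p ->
  forall r, 0 < r -> exists N, forall n, (N <= n)%N -> Nr (u n - p) < r.
Proof. by []. Qed.

Lemma cvg0' (u : nat -> Y) p : cvgR u p ->
  forall r, 0 < r -> exists N, forall n, (N <= n)%N -> Nr (p - u n) < r.
Proof. by move=> h r /h [N hN]; exists N => n /hN; rewrite NrC. Qed.

Lemma zero_of_Re (d : R[i]) : (forall e, 0 < e -> cRe (d^* * d) < e) -> d = 0.
Proof.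
move=> h; apply: ReJM0; apply/ler_addgt0Pr => e /h he.
by rewrite add0r ltW.
Qed.

Lemma lim_eq (u v : nat -> Y) p q x y : cvgR u p -> cvgR v q ->
  (forall n, ip (u n) x = ip (v n) y) -> ip p x = ip q y.
Proof.
move=> hu hv he; apply/eqP; rewrite -subr_eq0; apply/eqP.
set d := ip p x - ip q y.
have hd : forall n, d = ip (p - u n) x + ip (v n - q) y.
  move=> n; rewrite /d ipBl ipBl he; ring.
apply: zero_of_Re => e e0.
have e20 : 0 < e / 2 by rewrite divr_gt0.
have [N1 h1] := cont_Re (d *: x) (cvg0' hu) e20.
have [N2 h2] := cont_Re (d *: y) (cvg0 hv) e20.
have := h1 (maxn N1 N2) (leq_maxl _ _); have := h2 (maxn N1 N2) (leq_maxr _ _).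
rewrite !ipZr => a b.
rewrite [X in d^* * X](hd (maxn N1 N2)) mulrDr ReD.
have -> : e = e / 2 + e / 2 by rewrite -splitr.
by rewrite ltrD.
Qed.
End Hil.

Section Proj.
Variables (R : realType) (Y : lmodType R[i]) (ip : Y -> Y -> R[i]).
Hypothesis HY : is_hilbert ip.
Implicit Types (x y z : Y) (a c : R[i]) (k : R).
Local Notation Nr := (Nr ip).

Lemma half_add x : (2^-1 : R)%:C *: (x + x) = x.
Proof.
have -> : x + x = (1 + 1) *: x by rewrite scalerDl scale1r.
rewrite scalerA.
have -> : (2^-1 : R)%:C * (1 + 1) = 1.
  have -> : (1 + 1 : R[i]) = (2 : R)%:C by rewrite rmorph_nat.
  by rewrite -rmorphM mulVf // pnatr_eq0.
by rewrite scale1r.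
Qed.

Variable S : Y -> Prop.
Hypotheses (S0 : S 0) (SD : forall x y, S x -> S y -> S (x + y))
  (SZ : forall a x, S x -> S (a *: x))
  (Scl : forall u x, (forall n, S (u n)) -> cvg_to ip u x -> S x).

Lemma projection z : exists p, S p /\ forall s, S s -> ip (z - p) s = 0.
Proof.
pose E := [set r : R | exists s, S s /\ r = Nr (z - s)]%classic.
have hlb : has_lbound E by exists 0 => r [s [_ ->]]; exact: Nr_ge0.
have hinf : has_inf E by split => //; exists (Nr (z - 0)), 0.
set d := inf E.
have dlb : forall s, S s -> d <= Nr (z - s).
  by move=> s Ss; apply: ge_inf => //; exists s.
have hseq : forall n : nat, exists s, S s /\ Nr (z - s) < d + (n.+1%:R)^-1.
  move=> n; have hn : 0 < (n.+1%:R : R)^-1 by rewrite invr_gt0 ltr0Sn.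
  have [e [s [Ss ->]] he] := inf_adherent hn hinf.
  by exists s.
have [f hf] := choice hseq.
have hbnd : forall n m, Nr (f n - f m) <= 2 * (n.+1%:R)^-1 + 2 * (m.+1%:R)^-1.
  move=> n m; have [Sn hn] := hf n; have [Sm hm] := hf m.
  set a := z - f n; set b := z - f m.
  have par : Nr (a + b) + Nr (a - b) = 2 * Nr a + 2 * Nr b by rewrite (NrD HY) (NrB HY); ring.
  set mid := (2^-1 : R)%:C *: (f n + f m).
  have Smid : S mid by apply: SZ; apply: SD.
  have hmid : z - mid = (2^-1 : R)%:C *: (a + b).
    rewrite /a /b /mid addrACA -opprD scalerBr half_add //.
  have := dlb _ Smid; rewrite hmid (NrZk HY) => hd.
  have -> : f n - f m = - (a - b).
    by rewrite opprB /a /b opprB [RHS]addrC addrA subrK.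
  rewrite (NrN HY).
  have e1 : (2^-1 : R) ^+ 2 = 4^-1 by rewrite exprVn; congr (_^-1); rewrite expr2 -natrM.
  rewrite e1 in hd.
  have hd4 : 4 * d <= Nr (a + b).
    have h4 : Nr (a + b) = 4 * (4^-1 * Nr (a + b)) by field.
    rewrite h4 ler_pM2l //.
  rewrite -/a in hn; rewrite -/b in hm.
  have key : forall en em : R, Nr a < d + en -> Nr b < d + em -> Nr (a - b) <= 2 * en + 2 * em by move=> *; lra.
  exact: key hn hm.
have hcau : cauchyR ip f.
  move=> r r0; have r4 : 0 < r / 4 by rewrite divr_gt0.
  have [N hN] := arch r4; exists N => n m hn hm.
  have key : forall en em x : R, en < r / 4 -> em < r / 4 -> x <= 2 * en + 2 * em -> x < r by move=> *; lra.
  exact: key (hN n hn) (hN m hm) (hbnd n m).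
have [p hp] := complete HY hcau.
have Sp : S p by apply: (Scl (u := f)) => [n|]; [exact: (hf n).1 | apply/cvg_toE].
exists p; split => //.
have hdp : Nr (z - p) <= d.
  apply/ler_addgt0Pr => e e0.
  have e4 : 0 < e / 4 by rewrite divr_gt0.
  have e2 : 0 < e / 2 by rewrite divr_gt0.
  have [N1 h1] := cont_Re HY (z - p) (cvg0 hp) e4.
  have [N2 h2] := arch e2.
  set n := maxn N1 N2.
  have := h1 n (leq_maxl _ _); have := h2 n (leq_maxr _ _).
  have [_ hn] := hf n.
  have hid : z - f n = (z - p) - (f n - p) by rewrite opprB addrA subrK.
  rewrite hid (NrB HY) [cRe (ip (z - p) _)](ReipC HY) in hn.
  have := Nr_ge0 HY (f n - p).
  have key : forall (en N X Z : R), Z + N - 2 * X < d + en -> 0 <= N -> en < e / 2 -> X < e / 4 -> Z <= d + e by move=> *; lra.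
  exact: key hn.
move=> s Ss.
set al := ip (z - p) s.
set t := (Nr s + 1)^-1.
have hs := Nr_ge0 HY s.
have hs1 : Nr s + 1 != 0 by rewrite gt_eqF // ltr_wpDl.
have t0 : 0 < t by rewrite invr_gt0 ltr_wpDl.
have ht : t * Nr s + t = 1 by rewrite /t; field.
set c := t%:C * al.
have Sc : S (p + c *: s) by apply: SD => //; apply: SZ.
have := dlb _ Sc.
have -> : z - (p + c *: s) = (z - p) - c *: s by rewrite opprD addrA.
have hcj : complex.conjc (t%:C * al) = t%:C * complex.conjc al by apply: conjkM.
rewrite (NrB HY) (ipZr HY) -/al /c !numconjE hcj -mulrA ReMk.
rewrite /Nr (ipZl HY) (ipZr HY) !(ipxx HY) !numconjE hcj !Rek.
have -> : t%:C * al * (t%:C * complex.conjc al * (Nr s)%:C) = (t * t * Nr s)%:C * (complex.conjc al * al).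
  by rewrite !rmorphM; ring.
rewrite ReMk.
set q := cRe (complex.conjc al * al).
have q0 : 0 <= q by apply: ReJM_ge0.
move=> h.
have h2 : 0 <= t * (t * Nr s * q - 2 * q) by nra.
have h3 : 0 <= t * Nr s * q - 2 * q.
  by rewrite -(pmulr_rge0 _ t0).
have : q <= 0 by nra.
by move=> hq; apply: ReJM0.
Qed.
End Proj.

Section Pair.
Variables (R : realType) (X : lmodType R[i]) (ip : X -> X -> R[i]).
Hypothesis HX : is_hilbert ip.

Definition ip2 (u v : X * X) : R[i] := ip u.1 v.1 + ip u.2 v.2.

Lemma nsq2E w : nsq ip2 w = (Nr ip w.1 + Nr ip w.2)%:C.
Proof. by rewrite /nsq /ip2 !(ipxx HX) rmorphD. Qed.

Lemma hil2 : is_hilbert ip2.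
Proof.
split.
- move=> a [x1 x2] [y1 y2] [z1 z2]; rewrite /ip2 /=.
  rewrite !(ipDl HX) !(ipZl HX); ring.
- by move=> [x1 x2] [y1 y2]; rewrite /ip2 /= (ipC HX x1 y1) (ipC HX x2 y2) rmorphD.
- by move=> [x1 x2]; rewrite /ip2 /=; case: HX => _ _ hp _ _; rewrite addr_ge0.
- move=> [x1 x2]; rewrite /ip2 /=; case: HX => _ _ hp hd _.
  move/eqP; rewrite paddr_eq0 // => /andP[/eqP h1 /eqP h2].
  by rewrite (hd _ h1) (hd _ h2).
- move=> u hu.
  have hc : forall r : R, 0 < r -> exists N, forall n m, (N <= n)%N -> (N <= m)%N ->
      Nr ip ((u n).1 - (u m).1) + Nr ip ((u n).2 - (u m).2) < r.
    move=> r r0; have r0' : 0 < r%:C by rewrite ltr0c.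
    have [N hN] := hu _ r0'; exists N => n m hn hm.
    by have := hN n m hn hm; rewrite nsq2E normk ?ltcR // addr_ge0 // Nr_ge0.
  have [x1 h1] : exists x, cvgR ip (fun n => (u n).1) x.
    apply: (complete HX) => r /hc [N hN]; exists N => n m hn hm.
    have := hN n m hn hm; have := Nr_ge0 HX ((u n).2 - (u m).2); lra.
  have [x2 h2] : exists x, cvgR ip (fun n => (u n).2) x.
    apply: (complete HX) => r /hc [N hN]; exists N => n m hn hm.
    have := hN n m hn hm; have := Nr_ge0 HX ((u n).1 - (u m).1); lra.
  exists (x1, x2) => e e0; have [-> r0] := gt0_real e0.
  have r2 : 0 < cRe e / 2 by rewrite divr_gt0.
  have [N1 hN1] := h1 _ r2; have [N2 hN2] := h2 _ r2.
  exists (maxn N1 N2) => n hn.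
  have := hN1 n (leq_trans (leq_maxl _ _) hn); have := hN2 n (leq_trans (leq_maxr _ _) hn).
  rewrite nsq2E normk ?ltcR /=; last by rewrite addr_ge0 // Nr_ge0.
  move=> a b; have -> : cRe e = cRe e / 2 + cRe e / 2 by rewrite -splitr.
  exact: ltrD.
Qed.

Lemma cvg_fst (u : nat -> X * X) x : cvg_to ip2 u x -> cvg_to ip (fun n => (u n).1) x.1.
Proof.
move=> h; apply/(cvg_toE HX) => r r0.
have r0' : 0 < r%:C by rewrite ltr0c.
have [N hN] := h _ r0'; exists N => n /hN.
rewrite nsq2E normk ?ltcR /=; last by rewrite addr_ge0 // Nr_ge0.
by have := Nr_ge0 HX ((u n).2 - x.2); lra.
Qed.
Lemma cvg_snd (u : nat -> X * X) x : cvg_to ip2 u x -> cvg_to ip (fun n => (u n).2) x.2.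
Proof.
move=> h; apply/(cvg_toE HX) => r r0.
have r0' : 0 < r%:C by rewrite ltr0c.
have [N hN] := h _ r0'; exists N => n /hN.
rewrite nsq2E normk ?ltcR /=; last by rewrite addr_ge0 // Nr_ge0.
by have := Nr_ge0 HX ((u n).1 - x.1); lra.
Qed.

Definition orthR (T : linrel X) : linrel X :=
  fun x y => forall s1 s2, T s1 s2 -> ip x s1 + ip y s2 = 0.

Lemma proj_rel (T : linrel X) : closed_linrel ip T -> forall x y,
  exists p q, T p q /\ orthR T (x - p) (y - q).
Proof.
move=> [[T0 TD TZ] Tcl] x y.
have := @projection R _ ip2 hil2 (fun w => T w.1 w.2) T0
  (fun u v hu hv => TD _ _ _ _ hu hv) (fun a u hu => TZ a _ _ hu).
move=> /(_ _) H.
have [[p q] [Tpq hpq]] := H (fun u z hu hz => Tcl _ _ _ _ hu (cvg_fst hz) (cvg_snd hz)) (x, y).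
by exists p, q; split => // s1 s2 hs; apply: (hpq (s1, s2)).
Qed.
End Pair.

Section Rel.
Variables (R : realType) (X : lmodType R[i]) (ip : X -> X -> R[i]).
Hypothesis HX : is_hilbert ip.
Implicit Types (T S : linrel X).

Lemma lin_sub T : is_linrel T -> forall x y x' y', T x y -> T x' y' -> T (x - x') (y - y').
Proof.
move=> [T0 TD TZ] x y x' y' h h'.
by have := TD _ _ _ _ h (TZ (-1) _ _ h'); rewrite !scaleN1r.
Qed.
Lemma lin_opp T : is_linrel T -> forall x y, T x y -> T (- x) (- y).
Proof. by move=> [T0 TD TZ] x y h; have := TZ (-1) _ _ h; rewrite !scaleN1r. Qed.

Lemma lin_sum T : is_linrel T -> forall (I : Type) (s : seq I) (c : I -> R[i]) (x y : I -> X),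
  (forall i, T (x i) (y i)) -> T (\sum_(i <- s) c i *: x i) (\sum_(i <- s) c i *: y i).
Proof.
move=> [T0 TD TZ] I s c x y h; elim: s => [|i s IH]; first by rewrite !big_nil.
by rewrite !big_cons; apply: TD => //; apply: TZ.
Qed.

Lemma adj_lin T : is_linrel (adj ip T).
Proof.
split.
- by move=> x y _; rewrite (ip0l HX) (ip0l HX).
- by move=> x y x' y' h h' u v huv; rewrite !(ipDl HX) (h _ _ huv) (h' _ _ huv).
- by move=> a x y h u v huv; rewrite !(ipZl HX) (h _ _ huv).
Qed.

Lemma adj_closed T : closed_linrel ip (adj ip T).
Proof.
split; first exact: adj_lin.
move=> u v f g h hu hv x y hxy.
apply: (lim_eq HX (u := v) (v := u)); try by apply/(cvg_toE HX).
by move=> n; apply: h.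
Qed.

Lemma Tinf_closed T : closed_linrel ip T -> closed_linrel ip (Tinf T).
Proof.
move=> [[T0 TD TZ] Tcl]; split.
  split => //.
  - by move=> x y x' y' [-> h] [-> h']; rewrite addr0; split => //; rewrite -[0](addr0 0); apply: TD.
  - by move=> a x y [-> h]; rewrite scaler0; split => //; rewrite -[0](scaler0 _ a); apply: TZ.
move=> u v x y h hu hv.
have u0 : forall n, u n = 0 by move=> n; case: (h n).
have x0 : x = 0.
  apply: (Nr_le0 HX); apply/ler_addgt0Pr => e e0.
  move/(cvg_toE HX): hu => /(_ e e0) [N hN]; have := hN N (leqnn N).
  by rewrite u0 sub0r (NrN HX) add0r => /ltW.
split => //; rewrite -x0; apply: (Tcl u v) => // n.
by case: (h n) => ->.
Qed.

Lemma adj_swap S T : Defs.subrel S (adj ip T) -> Defs.subrel T (adj ip S).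
Proof.
move=> h x' y' hT x y hS.
have := h x y hS x' y' hT => e.
by rewrite (ipC HX x y') -e -(ipC HX).
Qed.

Lemma adj_anti S T : Defs.subrel S T -> Defs.subrel (adj ip T) (adj ip S).
Proof. by move=> h f g hg x y hxy; apply: hg; apply: h. Qed.

Lemma orth_adj T a b : orthR ip T a b -> adj ip T (- b) a.
Proof.
move=> h x y hxy; rewrite (ipNl HX); apply/eqP; rewrite -subr_eq0 opprK.
by rewrite h.
Qed.

Lemma adj_orth T f g : adj ip T f g -> orthR ip T g (- f).
Proof. by move=> h x y hxy; rewrite (ipNl HX) (h _ _ hxy) subrr. Qed.

Lemma orth_lin T : is_linrel (orthR ip T).
Proof.
split.
- by move=> s1 s2 _; rewrite !(ip0l HX) addr0.
- move=> x y x' y' h h' s1 s2 hs; rewrite !(ipDl HX).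
  by rewrite addrACA (h _ _ hs) (h' _ _ hs) addr0.
- by move=> a x y h s1 s2 hs; rewrite !(ipZl HX) -mulrDr (h _ _ hs) mulr0.
Qed.

Lemma orth_self T x y : T x y -> orthR ip T x y -> x = 0 /\ y = 0.
Proof.
move=> hT ho; have := ho _ _ hT.
rewrite (ipxx HX x) (ipxx HX y) -rmorphD => /(congr1 (@complex.Re R)) /=.
move=> e; have h1 := Nr_ge0 HX x; have h2 := Nr_ge0 HX y.
split; apply: (Nr_le0 HX); lra.
Qed.

Lemma Klemma (A' B' : linrel X) :
  releq (restr (Ts ip (adj ip B')) (dom A')) (Ts ip A') ->
  (forall y, mul0 (adj ip B') y -> ker (adj ip A') y -> y = 0) ->
  forall u w, adj ip B' u w -> orthR ip A' u w -> dom A' u -> u = 0 /\ w = 0.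
Proof.
move=> hs hz u w hB ho hd.
have hc : closed_linrel ip (Tinf (adj ip B')) by apply: Tinf_closed; apply: adj_closed.
have [p [q [[p0 hq] hpq]]] := proj_rel HX hc u w.
subst p; rewrite subr0 in hpq.
have hlB : is_linrel (adj ip B') by apply: adj_lin.
have hB' : adj ip B' u (w - q) by have := lin_sub hlB hB hq; rewrite subr0.
have hTs : Ts ip (adj ip B') u (w - q) by split => // s1 s2 hs12; apply: hpq.
have hA : A' u (w - q) by have [h _] := hs u (w - q); case: (h (conj hTs hd)).
have e1 := ho _ _ hA.
have e2 : ip (w - q) q = 0 by have := hpq 0 q (conj erefl hq); rewrite (ip0r HX) add0r.
have e3 : ip w (w - q) = ip (w - q) (w - q).
  rewrite (ipBl HX w q) [ip q (w - q)](ipC HX) e2.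
  by rewrite conjc0 subr0.
rewrite e3 in e1.
have [u0 wq] : u = 0 /\ w - q = 0.
  move: e1; rewrite (ipxx HX u) (ipxx HX (w - q)) -rmorphD => /(congr1 (@complex.Re R)) /=.
  move=> e; have h1 := Nr_ge0 HX u; have h2 := Nr_ge0 HX (w - q).
  split; apply: (Nr_le0 HX); lra.
have wq' : w = q by apply/eqP; rewrite -subr_eq0 wq.
split => //; apply: hz; first by rewrite /mul0 wq'.
move=> x y hxy; have := ho _ _ hxy; rewrite u0 (ip0l HX) add0r => ->.
by [].
Qed.
End Rel.

Local Close Scope complex_scope.

Lemma sum_sub (R : realType) (X : lmodType R[i]) (I : Type) (s : seq I) (c : I -> R[i]) (x y : I -> X) :
  \sum_(i <- s) c i *: (x i - y i) = \sum_(i <- s) c i *: x i - \sum_(i <- s) c i *: y i.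
Proof. by rewrite -sumrB; apply: eq_bigr => i _; rewrite scalerBr. Qed.
Lemma sum_opp (R : realType) (X : lmodType R[i]) (I : Type) (s : seq I) (c : I -> R[i]) (x : I -> X) :
  \sum_(i <- s) c i *: (- x i) = - \sum_(i <- s) c i *: x i.
Proof. by rewrite -sumrN; apply: eq_bigr => i _; rewrite scalerN. Qed.

Theorem theorem3p2 (R : realType) (X : lmodType R[i]) (ip : X -> X -> R[i])
  (HX : is_hilbert ip) (A B At : linrel X) :
  dual_pair ip A B ->
  releq (restr (Ts ip (adj ip A)) (dom B)) (Ts ip B) ->
  releq (restr (Ts ip (adj ip B)) (dom A)) (Ts ip A) ->
  (forall y, mul0 (adj ip B) y -> ker (adj ip A) y -> y = 0) ->
  (forall y, mul0 (adj ip A) y -> ker (adj ip B) y -> y = 0) ->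
  Ext ip A B At ->
  eqdim_quot (dom (adj ip B)) (dom At) (dom At) (dom A) ->
  quasi_selfadjoint ip A B At.
Proof.
move=> [cA [cB AB]] hsB hsA hzB hzA [cAt [AAt AtB]] [I [J [e [f [he hf [g hg]]]]]].
split; first by split.
have lA : is_linrel A by case: cA.
have lAt : is_linrel At by case: cAt.
have lB' : is_linrel (adj ip B) by apply: adj_lin.
have lAt' : is_linrel (adj ip At) by apply: adj_lin.
have oAt : is_linrel (orthR ip At) by apply: orth_lin.
have oB : is_linrel (orthR ip B) by apply: orth_lin.
have BAt : Defs.subrel B (adj ip At) by apply: adj_swap.
have AtA : Defs.subrel (adj ip At) (adj ip A) by apply: adj_anti.
have L2 : forall y, adj ip B 0 y -> A 0 y.
  move=> y hy; have [p [q [hpq ho]]] := proj_rel HX cA 0 y.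
  have hB1 : adj ip B (0 - p) (y - q) := lin_sub lB' hy (AB _ _ hpq).
  have hd : dom A (0 - p).
    by exists (0 - q); apply: lin_sub => //; case: lA.
  have [h1 h2] := Klemma HX hsA hzB hB1 ho hd.
  have -> : y = q by apply/eqP; rewrite -subr_eq0 h2.
  have -> : (0 : X) = p by apply/eqP; rewrite eq_sym -oppr_eq0 -sub0r h1.
  exact: hpq.
case: he => heV heI heS.
have [y hy] := choice heV.
have hpq : forall i, exists pq : X * X, At pq.1 pq.2 /\ orthR ip At (e i - pq.1) (y i - pq.2).
  by move=> i; have [p [q [h1 h2]]] := proj_rel HX cAt (e i) (y i); exists (p, q).
have [pq hpq'] := choice hpq.
pose r1 i := e i - (pq i).1.
pose r2 i := y i - (pq i).2.
have hr_adj : forall i, adj ip B (r1 i) (r2 i).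
  by move=> i; have [h _] := hpq' i; exact: (lin_sub lB' (hy i) (AtB _ _ h)).
have hr_orth : forall i, orthR ip At (r1 i) (r2 i) by move=> i; case: (hpq' i).
have hpqAt : forall i, At (pq i).1 (pq i).2 by move=> i; case: (hpq' i).
exists J, I, f, (fun i => - r2 i); split => //; last first.
  by case: hg => g' h1 h2; exists g'; exists g.
split.
- by move=> i; exists (r1 i); apply: orth_adj.
- move=> s c us hd i hi.
  pose w1 := \sum_(j <- s) c j *: r1 j.
  pose w2 := \sum_(j <- s) c j *: r2 j.
  have hw_adj : adj ip B w1 w2 by apply: lin_sum.
  have hw_orth : orthR ip At w1 w2 by apply: lin_sum.
  rewrite sum_opp -/w2 in hd.
  have k1 : adj ip A (- w2) w1 by apply: AtA; apply: orth_adj.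
  have k2 : orthR ip B (- w2) w1.
    by have := lin_opp oB (adj_orth HX hw_adj); rewrite opprK.
  have [_ w10] := Klemma HX hsB hzA k1 k2 hd.
  apply: (heI s c us) => //.
  exists (\sum_(j <- s) c j *: (pq j).2).
  have -> : \sum_(j <- s) c j *: e j = \sum_(j <- s) c j *: (pq j).1.
    by apply/eqP; rewrite -subr_eq0 -sum_sub; apply/eqP; exact: w10.
  by apply: lin_sum.
- move=> v [g0 hg0].
  have [q1 [q2 [hq hqo]]] := proj_rel HX cB v g0.
  set f' := v - q1; set g' := g0 - q2.
  have hfg : adj ip At f' g' := lin_sub lAt' hg0 (BAt _ _ hq).
  have hab : adj ip B g' (- f').
    by have := lin_opp lB' (orth_adj HX hqo); rewrite opprK.
  have habo : orthR ip At g' (- f') := adj_orth HX hfg.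
  have [s [c [d hd]]] := heS g' (ex_intro _ _ hab).
  exists s, c.
  pose X1 := \sum_(j <- s) c j *: e j.
  pose Y1 := \sum_(j <- s) c j *: y j.
  pose w1 := \sum_(j <- s) c j *: r1 j.
  pose w2 := \sum_(j <- s) c j *: r2 j.
  have hw_orth : orthR ip At w1 w2 by apply: lin_sum.
  have hXY : adj ip B X1 Y1 by apply: lin_sum.
  have h1 : adj ip B (g' - X1) (- f' - Y1) := lin_sub lB' hab hXY.
  have h2 : adj ip B 0 ((- f' - Y1) - d).
    by have := lin_sub lB' h1 (AtB _ _ hd); rewrite subrr.
  have h3 := L2 _ h2.
  have h4 : At (g' - X1) (- f' - Y1).
    case: lAt => _ TD _; have := TD _ _ _ _ hd (AAt _ _ h3).
    by rewrite addr0 [d + _]addrC subrK.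
  have h5 : At (g' - w1) (- f' - w2).
    have eqs : forall a b c0 : X, a - (b - c0) = a - b + c0.
      by move=> a b c0; rewrite opprB addrA addrAC.
    rewrite /w1 /w2 !sum_sub !eqs.
    have hP : At (\sum_(j <- s) c j *: (pq j).1) (\sum_(j <- s) c j *: (pq j).2) by apply: lin_sum.
    by case: lAt => _ TD _; exact: (TD _ _ _ _ h4 hP).
  have h6 : orthR ip At (g' - w1) (- f' - w2) := lin_sub oAt habo hw_orth.
  have [_ z2] := orth_self HX h5 h6.
  have ef : w2 = - f' by apply/eqP; rewrite eq_sym -subr_eq0 z2.
  rewrite sum_opp -/w2 ef opprK /f' opprB addrC subrK.
  by exists q2.
Qed.
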